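(* VD is resistant to cloning. For each $f\in\{\mathrm{MF},\mathrm{BC},\mathrm{MS},\mathrm{FT}\}$, resistance to cloning fails: there exist a finite candidate set $C$ and a profile $P$ over $C$ with clones $a,a'$ such that condition (1) or condition (2) of the definition of resistance to cloning is violated.
   Context: Candidates come from a fixed infinite universe; rules are defined for profiles over every finite candidate set $C$. An approval ballot is a nonempty subset $A\subseteq C$; a profile over $C$ is a finite sequence of ballots. For $c\in C$, $P_{-c}$ is the profile over $C\setminus\{c\}$ obtained by removing $c$ from every ballot (ballots that become empty are discarded), and for an axis $\triangleleft$ on $C$, $\triangleleft_{-c}$ is its restriction to $C\setminus\{c\}$. Two candidates $a,a'$ are clones in $P$ if for every ballot $A\in P$, $a\in A$ iff $a'\in A$. An axis rule $f$ is resistant to cloning if for every profile $P$ in which $a,a'$ are clones: (1) for every $\triangleleft\in f(P)$, $\triangleleft_{-a}\in f(P_{-a})$; and (2) for every $\triangleleft^*\in f(P_{-a})$ there is $\triangleleft\in f(P)$ with $\triangleleft_{-a}=\triangleleft^*$. An axis is a strict linear order $\triangleleft$ on $C$; $a\trianglelefteq b$ means $a\triangleleft b$ or $a=b$. A ballot $A$ is an interval of $\triangleleft$ if for all $a,b\in A$ and every $c$ with $a\triangleleft c\triangleleft b$ we have $c\in A$. For a cost function $\mathrm{cost}_f$, the scoring rule returns $f(P)=\arg\min_{\triangleleft}\sum_{A\in P}\mathrm{cost}_f(A,\triangleleft)$ over all axes on $C$. The five rules are the scoring rules (on every $C$) with costs: $\mathrm{cost}_{\mathrm{VD}}(A,\triangleleft)=0$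 if $A$ is an interval of $\triangleleft$ and $1$ otherwise; $\mathrm{cost}_{\mathrm{MF}}(A,\triangleleft)=\min_{x,y\in A,\ x\trianglelefteq y}\big(|\{z\in A: z\triangleleft x \text{ or } y\triangleleft z\}|+|\{z\notin A: x\triangleleft z\triangleleft y\}|\big)$; $\mathrm{cost}_{\mathrm{BC}}(A,\triangleleft)=|\{b\notin A: a\triangleleft b\triangleleft c \text{ for some } a,c\in A\}|$; $\mathrm{cost}_{\mathrm{MS}}(A,\triangleleft)=\sum_{x\in C\setminus A}\min\big(|\{y\in A:y\triangleleft x\}|,\,|\{y\in A:x\triangleleft y\}|\big)$; $\mathrm{cost}_{\mathrm{FT}}(A,\triangleleft)=\sum_{x\in C\setminus A}|\{y\in A:y\triangleleft x\}|\cdot|\{y\in A:x\triangleleft y\}|$. *)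

(* Defs.v *)
From mathcomp Require Import all_boot all_order.
From mathcomp Require Import finmap.
Set Implicit Arguments. Unset Strict Implicit. Unset Printing Implicit Defensive.
Local Open Scope fset_scope.

(* An axis (strict linear order) on C is represented by the duplicate-free
   sequence listing the elements of C from left to right. *)

Definition cand := nat.
Definition ballot := {fset cand}.
Definition profile := seq ballot.
Definition axis := seq cand.

Definition is_axis (C : {fset cand}) (ax : axis) : bool :=
  uniq ax && [forall x : C, val x \in ax] && all (fun x => x \in C) ax.

Definition profile_over (C : {fset cand}) (P : profile) : bool :=
  all (fun A : ballot => (A != fset0) && (A `<=` C)) P.

Definition ax_lt (ax : axis) (x y : cand) : bool :=
  [&& x \in ax, y \in ax & index x ax < index y ax].
Definition ax_le (ax : axis) (x y : cand) : bool := (x == y) || ax_lt ax x y.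

Definition is_interval (A : ballot) (ax : axis) : bool :=
  all (fun a => all (fun b => all (fun c => (ax_lt ax a c && ax_lt ax c b) ==> (c \in A))
                                  ax) A) A.

Definition cost_VD (A : ballot) (ax : axis) : nat :=
  if is_interval A ax then 0 else 1.

Definition mf_xy (A : ballot) (ax : axis) (x y : cand) : nat :=
  count (fun z => ax_lt ax z x || ax_lt ax y z) A
  + count (fun z => (z \notin A) && ax_lt ax x z && ax_lt ax z y) ax.

(* minimum of a list (the list is nonempty whenever A is nonempty) *)
Definition minlist (s : seq nat) : nat := \big[minn/head 0 s]_(v <- s) v.

Definition cost_MF (A : ballot) (ax : axis) : nat :=
  minlist [seq mf_xy A ax xy.1 xy.2 | xy <- [seq (x, y) | x <- A, y <- A] & ax_le ax xy.1 xy.2].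

Definition cost_BC (A : ballot) (ax : axis) : nat :=
  count (fun b => (b \notin A) &&
           has (fun a => has (fun c => ax_lt ax a b && ax_lt ax b c) A) A) ax.

Definition n_left (A : ballot) (ax : axis) (x : cand) : nat := count (fun y => ax_lt ax y x) A.
Definition n_right (A : ballot) (ax : axis) (x : cand) : nat := count (fun y => ax_lt ax x y) A.

Definition cost_MS (A : ballot) (ax : axis) : nat :=
  \sum_(x <- ax | x \notin A) minn (n_left A ax x) (n_right A ax x).

Definition cost_FT (A : ballot) (ax : axis) : nat :=
  \sum_(x <- ax | x \notin A) (n_left A ax x * n_right A ax x).

Definition total_cost (cost : ballot -> axis -> nat) (P : profile) (ax : axis) : nat :=
  \sum_(A <- P) cost A ax.

Definition in_rule (cost : ballot -> axis -> nat) (C : {fset cand}) (P : profile)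
  (ax : axis) : Prop :=
  is_axis C ax /\
  forall ax' : axis, is_axis C ax' -> total_cost cost P ax <= total_cost cost P ax'.

Definition prof_remove (P : profile) (c : cand) : profile :=
  [seq A `\ c | A <- P & A `\ c != fset0].

Definition ax_remove (ax : axis) (c : cand) : axis := filter (predC1 c) ax.

Definition clones (P : profile) (a a' : cand) : Prop :=
  forall A, A \in P -> (a \in A) = (a' \in A).

Definition resistant_to_cloning (cost : ballot -> axis -> nat) : Prop :=
  forall (C : {fset cand}) (P : profile) (a a' : cand),
    profile_over C P -> a \in C -> a' \in C -> a != a' -> clones P a a' ->
    (forall ax, in_rule cost C P ax -> in_rule cost (C `\ a) (prof_remove P a) (ax_remove ax a))
    /\
    (forall axs, in_rule cost (C `\ a) (prof_remove P a) axs ->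
       exists2 ax, in_rule cost C P ax & ax_remove ax a = axs).

(* Main.v *)
Require Import Defs.
From mathcomp Require Import all_boot all_order.
From mathcomp Require Import finmap.
From mathcomp Require Import zify.
Set Implicit Arguments. Unset Strict Implicit. Unset Printing Implicit Defensive.
Local Open Scope fset_scope.

Lemma index_filter (p : pred nat) (s : seq nat) x : p x ->
  index x (filter p s) = count p (take (index x s) s).
Proof.
move=> px; elim: s => [|z s IH] //=.
case: (eqVneq z x) => [->|nzx] /=; first by rewrite px /= eqxx.
by case pz: (p z) => /=; rewrite ?(negbTE nzx) /= IH.
Qed.

Lemma count_take_le (p : pred nat) (s : seq nat) i j : i <= j ->
  count p (take i s) <= count p (take j s).
Proof.
move=> hij; rewrite -(subnKC hij) takeD count_cat; exact: leq_addr.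
Qed.

Lemma count_take_lt (p : pred nat) (s : seq nat) x j : p x -> x \in s -> index x s < j ->
  count p (take (index x s) s) < count p (take j s).
Proof.
move=> px xs hij; rewrite -(subnKC hij) takeD count_cat.
have hs : index x s < size s by rewrite index_mem.
rewrite (take_nth x hs) -cats1 count_cat nth_index //= px; lia.
Qed.

Lemma ax_lt_filter (p : pred nat) s x y : p x -> p y ->
  ax_lt (filter p s) x y = ax_lt s x y.
Proof.
move=> px py; rewrite /ax_lt !mem_filter px py /= !index_filter //.
case Hx: (x \in s); case Hy: (y \in s) => //=.
case: (ltnP (index x s) (index y s)) => h.
  exact: count_take_lt.
by apply/negbTE; rewrite -leqNgt count_take_le.
Qed.

Lemma ax_lt_irr s x : ax_lt s x x = false.
Proof. by rewrite /ax_lt ltnn !andbF. Qed.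

Lemma ax_lt_mem s x y : ax_lt s x y -> (x \in s) /\ (y \in s).
Proof. by case/and3P. Qed.

Lemma ax_lt_asym s x y : ax_lt s x y -> ax_lt s y x -> False.
Proof. case/and3P=> _ _ h1; case/and3P=> _ _ h2; lia. Qed.

Lemma intervalP (A : ballot) ax :
  reflect (forall b d c, b \in A -> d \in A -> ax_lt ax b c -> ax_lt ax c d -> c \in A)
          (is_interval A ax).
Proof.
apply: (iffP idP).
  move=> H b d c Hb Hd H1 H2.
  move/allP: H => /(_ b Hb) /allP /(_ d Hd) /allP.
  have [_ Hc] := ax_lt_mem H1.
  by move=> /(_ c Hc) /implyP; apply; rewrite H1 H2.
move=> H; apply/allP => b Hb; apply/allP => d Hd; apply/allP => c Hc.
apply/implyP => /andP[H1 H2]; exact: H b d c Hb Hd H1 H2.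
Qed.

Lemma VD_remove (A : ballot) ax a :
  cost_VD (A `\ a) (ax_remove ax a) <= cost_VD A ax.
Proof.
rewrite /cost_VD; case HI: (is_interval A ax); last by case: ifP.
suff -> : is_interval (A `\ a) (ax_remove ax a) by [].
apply/intervalP => b d c; rewrite !in_fsetD1 => /andP[ba Hb] /andP[da Hd] H1 H2.
have [_ Hc] := ax_lt_mem H1.
rewrite mem_filter /= in Hc; case/andP: Hc => ca _.
rewrite /ax_remove !ax_lt_filter // in H1 H2.
rewrite ca /=; exact: (intervalP _ _ HI) b d c Hb Hd H1 H2.
Qed.

Lemma VD_total_remove P ax a :
  total_cost cost_VD (prof_remove P a) (ax_remove ax a) <= total_cost cost_VD P ax.
Proof.
rewrite /total_cost /prof_remove big_map big_filter big_mkcond.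
apply: leq_sum => A _; case: ifP => // _; exact: VD_remove.
Qed.

Definition ext (s : seq nat) (a a' : nat) :=
  take (index a' s) s ++ a :: drop (index a' s) s.

Lemma adj (t r : seq nat) (x y c : nat) : x \notin t -> y \notin t -> x != y -> c != x -> c != y ->
  c \in t ++ x :: y :: r ->
  ax_lt (t ++ x :: y :: r) c x = ax_lt (t ++ x :: y :: r) c y /\
  ax_lt (t ++ x :: y :: r) x c = ax_lt (t ++ x :: y :: r) y c.
Proof.
move=> xt yt xy cx cy Hc.
have Hx : x \in t ++ x :: y :: r by rewrite mem_cat inE eqxx orbT.
have Hy : y \in t ++ x :: y :: r by rewrite mem_cat !inE eqxx !orbT.
rewrite /ax_lt Hx Hy Hc /= !index_cat (negbTE xt) (negbTE yt) /= eqxx.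
rewrite (negbTE xy) eqxx.
case ct: (c \in t).
  have h : index c t < size t by rewrite index_mem ct.
  split; apply/idP/idP; lia.
rewrite (eq_sym x c) (negbTE cx) (eq_sym y c) (negbTE cy); split; apply/idP/idP; lia.
Qed.

Lemma ext_split s a a' : a' \in s ->
  exists t r, ext s a a' = t ++ a :: a' :: r /\ s = t ++ a' :: r /\ a' \notin t.
Proof.
move=> Ha; exists (take (index a' s) s), (drop (index a' s).+1 s).
have Hd : drop (index a' s) s = a' :: drop (index a' s).+1 s.
  by rewrite (drop_nth a') ?index_mem // nth_index.
split; first by rewrite /ext Hd.
split; first by rewrite -Hd cat_take_drop.
apply/negP => Ht.
have hs : index a' s < size s by rewrite index_mem.
have e : index a' s = index a' (take (index a' s) s ++ drop (index a' s) s).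
  by rewrite cat_take_drop.
rewrite index_cat Ht in e.
have : index a' (take (index a' s) s) < size (take (index a' s) s) by rewrite index_mem.
by rewrite -e size_take hs ltnn.
Qed.

Lemma filter_ext s a a' : a \notin s -> ax_remove (ext s a a') a = s.
Proof.
move=> Ha; rewrite /ax_remove /ext filter_cat /= eqxx /= -filter_cat cat_take_drop.
apply/all_filterP/allP => x Hx /=; apply/eqP => e; subst; by rewrite Hx in Ha.
Qed.

Lemma perm_ext s a a' : perm_eq (ext s a a') (a :: s).
Proof.
have h := perm_catCA (take (index a' s) s) [:: a] (drop (index a' s) s).
by rewrite /= in h; rewrite /ext h cat_take_drop.
Qed.

Lemma VD_ext (A : ballot) s a a' : a \notin s -> a' \in s -> a != a' ->
  (a \in A) = (a' \in A) ->
  cost_VD A (ext s a a') <= (if A `\ a != fset0 then cost_VD (A `\ a) s else 0).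
Proof.
move=> as_ a's aa' Hcl.
have Htr : forall x y, x != a -> y != a -> ax_lt (ext s a a') x y = ax_lt s x y.
  move=> x y xa ya; rewrite -{2}(filter_ext a' as_) /ax_remove ax_lt_filter //.
have [t [r [Hext [Hs a't]]]] := ext_split a a's.
have at_ : a \notin t by apply: contra as_; rewrite Hs mem_cat => ->.
have Hadj : forall c, c \in ext s a a' -> c != a -> c != a' ->
  ax_lt (ext s a a') c a = ax_lt (ext s a a') c a' /\
  ax_lt (ext s a a') a c = ax_lt (ext s a a') a' c.
  by move=> c; rewrite Hext => Hc ca ca'; apply: adj.
case: ifP => [HA|HA]; last first.
  rewrite /cost_VD; suff -> : is_interval A (ext s a a') by [].
  have HAa : forall b, b \in A -> b = a.
    move=> b Hb; case: (eqVneq b a) => // ba; exfalso.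
    move/negbFE/eqP: HA => HA.
    have : b \in A `\ a by rewrite in_fsetD1 ba.
    by rewrite HA inE.
  apply/intervalP => b d c Hb Hd H1 H2.
  rewrite (HAa _ Hb) in H1; rewrite (HAa _ Hd) in H2.
  by case: (ax_lt_asym H1 H2).
rewrite /cost_VD; case HI: (is_interval (A `\ a) s); last by case: ifP.
suff -> : is_interval A (ext s a a') by [].
have HIP := intervalP _ _ HI.
apply/intervalP => b d c Hb Hd H1 H2.
have [Hbe Hce] := ax_lt_mem H1.
have [_ Hde] := ax_lt_mem H2.
case: (boolP ((c == a) || (c == a'))) => Hc.
  case aA: (a \in A).
    by case/orP: Hc => /eqP ->; rewrite // -Hcl.
  have a'A : a' \notin A by rewrite -Hcl aA.
  have ba : b != a by apply: contraNneq (negbT aA) => <-.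
  have ba' : b != a' by apply: contraNneq a'A => <-.
  have da : d != a by apply: contraNneq (negbT aA) => <-.
  have da' : d != a' by apply: contraNneq a'A => <-.
  have [h1 h2] : ax_lt (ext s a a') b a' /\ ax_lt (ext s a a') a' d.
    case/orP: Hc => /eqP ec; subst c; last by [].
    have [e1 _] := Hadj b Hbe ba ba'.
    have [_ e2] := Hadj d Hde da da'.
    by rewrite -e1 -e2.
  rewrite !Htr // 1?eq_sym // in h1 h2.
  have := HIP b d a'; rewrite !in_fsetD1 ba Hb da Hd eq_sym aa' => /(_ isT isT h1 h2).
  by rewrite /= (negbTE a'A).
rewrite negb_or in Hc; case/andP: Hc => ca ca'.
have [Ha1 Ha2] := Hadj c Hce ca ca'.
pose b' := if b == a then a' else b.
pose d' := if d == a then a' else d.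
have Hb' : b' \in A `\ a.
  rewrite in_fsetD1 /b'; case: (eqVneq b a) => [e|ne]; last by rewrite ne Hb.
  by subst b; rewrite eq_sym aa' -Hcl Hb.
have Hd' : d' \in A `\ a.
  rewrite in_fsetD1 /d'; case: (eqVneq d a) => [e|ne]; last by rewrite ne Hd.
  by subst d; rewrite eq_sym aa' -Hcl Hd.
have h1 : ax_lt s b' c.
  rewrite -Htr //; last by move: Hb'; rewrite in_fsetD1 => /andP[].
  by rewrite /b'; case: (eqVneq b a) => // e; subst b; rewrite -Ha2.
have h2 : ax_lt s c d'.
  rewrite -Htr //; last by move: Hd'; rewrite in_fsetD1 => /andP[].
  by rewrite /d'; case: (eqVneq d a) => // e; subst d; rewrite -Ha1.
have := HIP b' d' c Hb' Hd' h1 h2; rewrite in_fsetD1 => /andP[].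
by [].
Qed.

Lemma is_axisP (C : {fset cand}) ax :
  is_axis C ax <-> [/\ uniq ax, {subset C <= ax} & {subset ax <= C}].
Proof.
rewrite /is_axis; split.
  move/andP=> [/andP[Hu /forallP Hf] /allP Ha]; split => // x Hx.
  exact: (Hf [` Hx]).
case=> Hu Hs1 Hs2; apply/andP; split; first (apply/andP; split => //).
  by apply/forallP => -[x Hx] /=; apply: Hs1.
by apply/allP => x; apply: Hs2.
Qed.

Lemma axis_remove (C : {fset cand}) ax a :
  is_axis C ax -> is_axis (C `\ a) (ax_remove ax a).
Proof.
case/is_axisP => Hu H1 H2; apply/is_axisP; split.
- exact: filter_uniq.
- move=> x; rewrite in_fsetD1 mem_filter => /andP[xa xC]; by rewrite /= xa H1.
- move=> x; rewrite mem_filter in_fsetD1 /= => /andP[xa xs]; by rewrite xa H2.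
Qed.

Lemma axis_ext (C : {fset cand}) s a a' :
  a \in C -> is_axis (C `\ a) s -> is_axis C (ext s a a').
Proof.
move=> aC /is_axisP [Hu H1 H2].
have as_ : a \notin s by apply/negP => /H2; rewrite in_fsetD1 eqxx.
have Hp := perm_ext s a a'.
apply/is_axisP; split.
- by rewrite (perm_uniq Hp) /= as_ Hu.
- move=> x xC; rewrite (perm_mem Hp) inE.
  case: (eqVneq x a) => //= xa; apply: H1; by rewrite in_fsetD1 xa.
- move=> x; rewrite (perm_mem Hp) inE => /orP[/eqP -> //|/H2].
  by rewrite in_fsetD1 => /andP[].
Qed.

Lemma VD_total_ext P s a a' : a \notin s -> a' \in s -> a != a' -> clones P a a' ->
  total_cost cost_VD P (ext s a a') <= total_cost cost_VD (prof_remove P a) s.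
Proof.
move=> as_ a's aa' Hcl.
rewrite /total_cost /prof_remove big_map big_filter [X in _ <= X]big_mkcond /= !big_seq.
apply: leq_sum => A HA; exact: VD_ext (Hcl A HA).
Qed.

Theorem VD_resistant : resistant_to_cloning cost_VD.
Proof.
move=> C P a a' HP aC a'C aa' Hcl.
have Hext : forall s, is_axis (C `\ a) s ->
  [/\ is_axis C (ext s a a'), ax_remove (ext s a a') a = s &
      total_cost cost_VD P (ext s a a') <= total_cost cost_VD (prof_remove P a) s].
  move=> s Hs; have := Hs; case/is_axisP => _ H1 H2.
  have as_ : a \notin s by apply/negP => /H2; rewrite in_fsetD1 eqxx.
  have a's : a' \in s by apply: H1; rewrite in_fsetD1 eq_sym aa'.
  split; [exact: axis_ext | exact: filter_ext | exact: VD_total_ext].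
split.
  move=> ax [Hax Hopt]; split; first exact: axis_remove.
  move=> s Hs; have [He _ Hc] := Hext s Hs.
  apply: leq_trans (VD_total_remove P ax a) _.
  exact: leq_trans (Hopt _ He) Hc.
move=> s [Hs Hopt]; have [He Hr Hc] := Hext s Hs.
exists (ext s a a') => //; split => // ax' Hax'.
apply: leq_trans Hc _; apply: leq_trans (Hopt _ (axis_remove a Hax')) _.
exact: VD_total_remove.
Qed.

Definition R (A : ballot) (l : seq nat) := perm_eq (A : seq nat) l.

Definition mf_xy' (A : seq nat) (ax : axis) (x y : cand) : nat :=
  count (fun z => ax_lt ax z x || ax_lt ax y z) A
  + count (fun z => (z \notin A) && ax_lt ax x z && ax_lt ax z y) ax.
Definition cost_MF' (A : seq nat) (ax : axis) : nat :=
  minlist [seq mf_xy' A ax xy.1 xy.2 | xy <- [seq (x, y) | x <- A, y <- A] & ax_le ax xy.1 xy.2].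
Definition cost_BC' (A : seq nat) (ax : axis) : nat :=
  count (fun b => (b \notin A) &&
           has (fun a => has (fun c => ax_lt ax a b && ax_lt ax b c) A) A) ax.
Definition n_left' (A : seq nat) (ax : axis) (x : cand) : nat := count (fun y => ax_lt ax y x) A.
Definition n_right' (A : seq nat) (ax : axis) (x : cand) : nat := count (fun y => ax_lt ax x y) A.
Definition cost_MS' (A : seq nat) (ax : axis) : nat :=
  \sum_(x <- ax | x \notin A) minn (n_left' A ax x) (n_right' A ax x).
Definition cost_FT' (A : seq nat) (ax : axis) : nat :=
  \sum_(x <- ax | x \notin A) (n_left' A ax x * n_right' A ax x).

Lemma minlist_le x s : (x <= minlist s) = (x <= head 0 s) && all (fun v => x <= v) s.
Proof.
rewrite /minlist; elim: s (head 0 s) => [|v s IH] i; first by rewrite big_nil andbT.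
by rewrite big_cons leq_min IH /= andbCA.
Qed.

Lemma minlist_perm s t : perm_eq s t -> minlist s = minlist t.
Proof.
move=> h.
have key : forall x, (x <= minlist s) = (x <= minlist t).
  move=> x; rewrite !minlist_le.
  case: s h => [|v s] h.
    by case: t h => // w t /perm_size.
  case: t h => [|w t] h; first by have := perm_size h.
  rewrite -(eq_all_r (perm_mem h)).
  have Hw : w \in v :: s by rewrite (perm_mem h) mem_head.
  change (head 0 (v :: s)) with v; change (head 0 (w :: t)) with w.
  case Ha: (all (fun v => x <= v) (v :: s)); last by rewrite !andbF.
  by have Hall := allP Ha; rewrite (Hall w Hw) (Hall v (mem_head _ _)).
by apply/eqP; rewrite eqn_leq key leqnn -key leqnn.
Qed.

Lemma perm_count' (s t : seq nat) p : perm_eq s t -> count p s = count p t.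
Proof. by move/permP. Qed.

Lemma perm_has' (s t : seq nat) p : perm_eq s t -> has p s = has p t.
Proof. by move=> h; rewrite !has_count (perm_count' _ h). Qed.

Lemma mf_perm s t ax x y : perm_eq s t -> mf_xy' s ax x y = mf_xy' t ax x y.
Proof.
move=> h; rewrite /mf_xy'; congr addn; first exact: perm_count'.
by apply: eq_count => z; rewrite (perm_mem h).
Qed.

Lemma MF_perm s t ax : perm_eq s t -> cost_MF' s ax = cost_MF' t ax.
Proof.
move=> h; rewrite /cost_MF'; apply: minlist_perm.
rewrite (eq_map (fun xy => mf_perm ax xy.1 xy.2 h)).
by apply: perm_map; apply: perm_filter; apply: perm_allpairs.
Qed.

Lemma BC_perm s t ax : perm_eq s t -> cost_BC' s ax = cost_BC' t ax.
Proof.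
move=> h; rewrite /cost_BC'; apply: eq_count => b.
rewrite (perm_mem h) (perm_has' _ h); congr (_ && _).
by apply: eq_has => a; rewrite (perm_has' _ h).
Qed.

Lemma MS_perm s t ax : perm_eq s t -> cost_MS' s ax = cost_MS' t ax.
Proof.
move=> h; rewrite /cost_MS' /n_left' /n_right'.
rewrite (eq_bigl (fun x => x \notin t)); last by move=> x; rewrite (perm_mem h).
by apply: eq_bigr => x _; rewrite !(perm_count' _ h).
Qed.

Lemma FT_perm s t ax : perm_eq s t -> cost_FT' s ax = cost_FT' t ax.
Proof.
move=> h; rewrite /cost_FT' /n_left' /n_right'.
rewrite (eq_bigl (fun x => x \notin t)); last by move=> x; rewrite (perm_mem h).
by apply: eq_bigr => x _; rewrite !(perm_count' _ h).
Qed.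

Lemma MF_conv A l ax : R A l -> cost_MF A ax = cost_MF' l ax.
Proof. move=> h; exact: (MF_perm ax h). Qed.
Lemma BC_conv A l ax : R A l -> cost_BC A ax = cost_BC' l ax.
Proof. move=> h; exact: (BC_perm ax h). Qed.
Lemma MS_conv A l ax : R A l -> cost_MS A ax = cost_MS' l ax.
Proof. move=> h; exact: (MS_perm ax h). Qed.
Lemma FT_conv A l ax : R A l -> cost_FT A ax = cost_FT' l ax.
Proof. move=> h; exact: (FT_perm ax h). Qed.

Definition tot' (cost' : seq nat -> axis -> nat) (Pl : seq (seq nat)) (ax : axis) :=
  \sum_(l <- Pl) cost' l ax.
Definition prem (Pl : seq (seq nat)) (a : nat) :=
  [seq filter (predC1 a) l | l <- Pl & filter (predC1 a) l != [::]].

Section Gen.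
Variable cost : ballot -> axis -> nat.
Variable cost' : seq nat -> axis -> nat.
Hypothesis Hc : forall A l ax, R A l -> cost A ax = cost' l ax.

Lemma total_conv P Pl ax : all2 R P Pl -> total_cost cost P ax = tot' cost' Pl ax.
Proof.
elim: P Pl => [|A P IH] [|l Pl] //=; first by rewrite /total_cost /tot' !big_nil.
move/andP=> [h1 h2]; rewrite /total_cost /tot' !big_cons (Hc _ h1); congr addn; exact: IH.
Qed.

Lemma R_remove A l a : R A l ->
  R (A `\ a) (filter (predC1 a) l) /\ ((A `\ a != fset0) = (filter (predC1 a) l != [::])).
Proof.
move=> h; have hu : uniq l by rewrite -(perm_uniq h) fset_uniq.
have hp : R (A `\ a) (filter (predC1 a) l).
  apply: uniq_perm; [exact: fset_uniq | exact: filter_uniq | move=> x].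
  by rewrite mem_filter -(perm_mem h); apply: in_fsetD1.
split => //; rewrite -cardfs_eq0 -size_eq0.
by change (size (A `\ a : seq nat) != 0) with (size (A `\ a : seq nat) != 0); rewrite (perm_size hp).
Qed.

Lemma all2_remove P Pl a : all2 R P Pl -> all2 R (prof_remove P a) (prem Pl a).
Proof.
elim: P Pl => [|A P IH] [|l Pl] //= /andP[h1 h2].
have [hr he] := R_remove a h1.
rewrite /prof_remove /prem /= he; case: ifP => _ /=; last exact: IH.
by rewrite hr; exact: IH.
Qed.

Lemma axis_dec (C : {fset cand}) Cl ax : (forall x, (x \in C) = (x \in Cl)) -> uniq Cl ->
  is_axis C ax <-> perm_eq ax Cl.
Proof.
move=> hm hu; rewrite is_axisP; split.
  case=> h1 h2 h3; apply: uniq_perm => // x; apply/idP/idP => hx.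
    by rewrite -hm; apply: h3.
  by apply: h2; rewrite hm.
move=> h; split; first by rewrite (perm_uniq h).
  by move=> x; rewrite hm (perm_mem h).
by move=> x; rewrite hm -(perm_mem h).
Qed.

Lemma in_rule_dec (C : {fset cand}) Cl P Pl ax :
  (forall x, (x \in C) = (x \in Cl)) -> uniq Cl -> all2 R P Pl ->
  in_rule cost C P ax <->
  (perm_eq ax Cl /\ all (fun ax' => tot' cost' Pl ax <= tot' cost' Pl ax') (permutations Cl)).
Proof.
move=> hm hu hP; rewrite /in_rule (axis_dec _ hm hu); split.
  case=> h1 h2; split => //; apply/allP => ax' hax'.
  rewrite -!(total_conv _ hP); apply: h2; rewrite (axis_dec _ hm hu).
  by rewrite -mem_permutations.
case=> h1 /allP h2; split => // ax'; rewrite (axis_dec _ hm hu) -mem_permutations => hax'.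
by rewrite !(total_conv _ hP); apply: h2.
Qed.

Lemma not_res2 (C : {fset cand}) Cl Cl' P Pl a a' axs ref :
  (forall x, (x \in C) = (x \in Cl)) -> uniq Cl ->
  (forall x, (x \in C `\ a) = (x \in Cl')) -> uniq Cl' ->
  all2 R P Pl ->
  all (fun l => (l != [::]) && all (fun x => x \in Cl) l && ((a \in l) == (a' \in l))) Pl ->
  (a \in Cl) && (a' \in Cl) && (a != a') ->
  perm_eq axs Cl' ->
  all (fun ax' => tot' cost' (prem Pl a) axs <= tot' cost' (prem Pl a) ax') (permutations Cl') ->
  perm_eq ref Cl ->
  all (fun ax => (ax_remove ax a != axs) ||
        (tot' cost' Pl ref < tot' cost' Pl ax)) (permutations Cl) ->
  ~ resistant_to_cloning cost.
Proof.
move=> hm hu hm' hu' hP hPl haa haxs hopt href hbad Hres.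
have HPover : profile_over C P.
  elim: P Pl hP hPl {hbad hopt} => [|A P IH] [|l Pl] //= /andP[h1 h2] /andP[hl hl'].
  apply/andP; split; last exact: IH hl'.
  case/andP: hl => /andP[ne sub] _.
  apply/andP; split.
    by rewrite -cardfs_eq0; change (size (A : seq nat) != 0); rewrite (perm_size h1) size_eq0.
  apply/fsubsetP => x; change (x \in (A : seq nat) -> x \in C); rewrite (perm_mem h1) hm.
  by move/allP: sub; apply.
have Hcl : clones P a a'.
  elim: P Pl hP hPl {hbad hopt HPover} => [|A P IH] [|l Pl] //= /andP[h1 h2] /andP[hl hl'] B.
  rewrite inE => /orP[/eqP ->|hB]; last exact: IH hl' B hB.
  case/andP: hl => _ /eqP e; change ((a \in (A : seq nat)) = (a' \in (A : seq nat))).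
  by rewrite !(perm_mem h1).
case/andP: haa => /andP[ha ha'] aa'.
have haC : a \in C by rewrite hm.
have ha'C : a' \in C by rewrite hm.
have [_ H2] := Hres C P a a' HPover haC ha'C aa' Hcl.
have hP' := all2_remove a hP.
have [ax hax hrem] : exists2 ax, in_rule cost C P ax & ax_remove ax a = axs.
  by apply: H2; rewrite (in_rule_dec _ hm' hu' hP').
case/(in_rule_dec _ hm hu hP): hax => hax /allP hopt'.
move/allP: hbad => /(_ ax); rewrite mem_permutations => /(_ hax).
rewrite hrem eqxx /= => hlt.
by have := hopt' ref; rewrite mem_permutations href leqNgt hlt => /(_ isT).
Qed.

End Gen.

Lemma R_of (A : ballot) l : (forall x, (x \in A) = (x \in l)) -> uniq l -> R A l.
Proof. move=> h hu; apply: uniq_perm => //; exact: fset_uniq. Qed.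

Ltac memt := intro; rewrite ?in_fsetD1 !inE; by repeat case: (_ == _).
Ltac memD := let x := fresh "x" in intro x; rewrite in_fsetD1 !inE; case: x => [|x] //=; by repeat case: (_ == _).
Ltac comp := rewrite /tot' /cost_MF' /cost_BC' /cost_MS' /cost_FT' /minlist ?unlock; vm_compute; reflexivity.
Ltac Rt := apply: R_of; [memt | by []].
Ltac all2t := rewrite /=; repeat (apply/andP; split); try done; Rt.

Theorem MF_not : ~ resistant_to_cloning cost_MF.
Proof.
apply: (@not_res2 cost_MF cost_MF' MF_conv [fset 0;1;2;3;4;5] [:: 0;1;2;3;4;5] [:: 1;2;3;4;5]
   [:: [fset 2;4;5]; [fset 0;1;2;3;4]; [fset 0;1;2;5]]
   [:: [:: 2;4;5]; [:: 0;1;2;3;4]; [:: 0;1;2;5]] 0 1 [:: 1;3;4;2;5] [:: 0;1;2;5;4;3]).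
- memt.
- by [].
- memD.
- by [].
- all2t.
- comp.
- comp.
- comp.
- comp.
- comp.
- comp.
Qed.

Theorem BC_not : ~ resistant_to_cloning cost_BC.
Proof.
apply: (@not_res2 cost_BC cost_BC' BC_conv [fset 0;1;2;3] [:: 0;1;2;3] [:: 1;2;3]
   [:: [fset 2;3]; [fset 0;1;2]; [fset 0;1;3]]
   [:: [:: 2;3]; [:: 0;1;2]; [:: 0;1;3]] 0 1 [:: 2;1;3] [:: 0;1;2;3]).
- memt.
- by [].
- memD.
- by [].
- all2t.
- comp.
- comp.
- comp.
- comp.
- comp.
- comp.
Qed.

Theorem MS_not : ~ resistant_to_cloning cost_MS.
Proof.
apply: (@not_res2 cost_MS cost_MS' MS_conv [fset 0;1;2;3] [:: 0;1;2;3] [:: 1;2;3]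
   [:: [fset 2;3]; [fset 0;1;2]; [fset 0;1;3]]
   [:: [:: 2;3]; [:: 0;1;2]; [:: 0;1;3]] 0 1 [:: 2;1;3] [:: 0;1;2;3]).
- memt.
- by [].
- memD.
- by [].
- all2t.
- comp.
- comp.
- comp.
- comp.
- comp.
- comp.
Qed.

Theorem FT_not : ~ resistant_to_cloning cost_FT.
Proof.
apply: (@not_res2 cost_FT cost_FT' FT_conv [fset 0;1;2;3;4] [:: 0;1;2;3;4] [:: 1;2;3;4]
   [:: [fset 2;3]; [fset 2;4]; [fset 0;1;2]]
   [:: [:: 2;3]; [:: 2;4]; [:: 0;1;2]] 0 1 [:: 1;3;2;4] [:: 0;1;2;3;4]).
- memt.
- by [].
- memD.
- by [].
- all2t.
- comp.
- comp.
- comp.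
- comp.
- comp.
- comp.
Qed.


Theorem mainTheorem10 :
  resistant_to_cloning cost_VD /\
  ~ resistant_to_cloning cost_MF /\
  ~ resistant_to_cloning cost_BC /\
  ~ resistant_to_cloning cost_MS /\
  ~ resistant_to_cloning cost_FT.
Proof.
split; first exact: VD_resistant.
split; first exact: MF_not.
split; first exact: BC_not.
split; first exact: MS_not.
exact: FT_not.
Qed.
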